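(* Let $m,n,d,e$ be positive integers with $m=2n$ and $e=\gcd(n,d)=\gcd(m,d)$, and let $s\ge0$ and $u\ge1$ be integers. If $H$ is an $\mathbb{F}_{2^e}$-subspace of $\mathbb{F}_{2^e}^u$ of dimension $i$, then \[|W_{s,u,H}|=2^{mi}\,|V_{s,u-i}|.\]
   Context: For integers $s\ge0$ and $u\ge1$, $V_{s,u}$ denotes the set of solutions $(x_1,\dots,x_{2u})\in\mathbb{F}_{2^m}^{2u}$ of the system \[\sum_{i=1}^u\big(x_{2i-1}x_{2i}^{2^{(\frac{n}{e}-j)d}}+x_{2i-1}^{2^{(\frac{n}{e}-j)d}}x_{2i}\big)=0,\qquad j=0,1,\dots,s.\] By convention $|V_{s,0}|=1$. For $\vec x=(x_1,\dots,x_{2u})\in V_{s,u}$ let $Z(\vec x)=\{(c_1,\dots,c_u)\in\mathbb{F}_{2^e}^u\mid \sum_{i=1}^u c_ix_{2i}=0\}$. For a subspace $H\subseteq\mathbb{F}_{2^e}^u$ let $W_{s,u,H}=\{\vec x\in V_{s,u}\mid Z(\vec x)\supseteq H\}$. *)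

(* Defs.v *)
From HB Require Import structures.
From mathcomp Require Import all_boot all_order all_algebra all_field.
Set Implicit Arguments. Unset Strict Implicit. Unset Printing Implicit Defensive.
Import Order.TTheory GRing.Theory Num.Theory.
Local Open Scope ring_scope.

(* F plays the role of F_{2^m}.  The Frobenius power x^(2^t) for an integer
   t (possibly negative) is x^(2^(t mod m)), since x^(2^m) = x on F_{2^m}. *)
Definition frobz (F : finFieldType) (m : nat) (t : int) (x : F) : F :=
  x ^+ (2 ^ `|(t %% m%:Z)%Z|%N)%N.

(* A point (x_1,...,x_{2u}) of F^{2u} is encoded as x : {ffun 'I_u -> F * F}
   with x i = (x_{2i-1}, x_{2i})  (0-based i). *)
Definition Vset (F : finFieldType) (m n d e s u : nat) : {set {ffun 'I_u -> F * F}} :=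
  [set x : {ffun 'I_u -> F * F} |
    [forall j : 'I_s.+1,
      \sum_(i < u)
        ((x i).1 * frobz m (((n %/ e)%:Z - (nat_of_ord j)%:Z) * d%:Z) (x i).2
         + frobz m (((n %/ e)%:Z - (nat_of_ord j)%:Z) * d%:Z) (x i).1 * (x i).2)
      == 0]].

(* K plays the role of F_{2^e}, embedded in F by iota. *)
Definition Zset (K F : finFieldType) (iota : {rmorphism K -> F}) (u : nat)
  (x : {ffun 'I_u -> F * F}) : {set 'rV[K]_u} :=
  [set c : 'rV[K]_u | \sum_(i < u) iota (c 0 i) * (x i).2 == 0].

Definition Wset (K F : finFieldType) (iota : {rmorphism K -> F})
  (m n d e s u : nat) (H : {vspace 'rV[K]_u}) : {set {ffun 'I_u -> F * F}} :=
  [set x in Vset F m n d e s u |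
    [forall c : 'rV[K]_u, (c \in H) ==> (c \in Zset iota x)]].
Arguments Vset F m n d e s u : clear implicits.
Arguments Wset K F iota m n d e s u H : clear implicits.
Arguments Zset K F iota u x : clear implicits.

(* Main.v *)
Require Import Defs.
From HB Require Import structures.
From mathcomp Require Import all_boot all_order all_algebra all_field.
Import GRing.Theory.
Local Open Scope ring_scope.
Set Implicit Arguments. Unset Strict Implicit.

Lemma frobD (F : finFieldType) (ch : (2 \in [pchar F])%N) t (x y : F) :
  (x + y) ^+ (2 ^ t) = x ^+ (2 ^ t) + y ^+ (2 ^ t).
Proof.
have h2 : ([pchar F]).-nat 2 by rewrite pnatE.
elim: t => [|t IH]; first by rewrite !expn0 !expr1.
by rewrite expnSr !exprM IH exprDn_pchar.
Qed.

Lemma frob0 (F : finFieldType) t : (0 : F) ^+ (2 ^ t) = 0.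
Proof. by rewrite expr0n expn_eq0. Qed.

Lemma frob_sum (F : finFieldType) (ch : (2 \in [pchar F])%N) t (I : finType) (f : I -> F) :
  (\sum_i f i) ^+ (2 ^ t) = \sum_i (f i) ^+ (2 ^ t).
Proof.
apply: (big_morph (fun x : F => x ^+ (2 ^ t))); first exact: frobD.
exact: frob0.
Qed.

Lemma fixK (K : finFieldType) e : #|K| = (2 ^ e)%N -> forall r (k : K), k ^+ (2 ^ (e * r)) = k.
Proof.
move=> hK; elim=> [|r IH] k; first by rewrite muln0 expn0 expr1.
by rewrite mulnS expnD exprM -hK expf_card IH.
Qed.

Lemma dvd_t (e m : nat) (z : int) : (e %| m)%N -> (e%:Z %| z)%Z -> (e %| `|(z %% m%:Z)%Z|)%N.
Proof.
move=> hm hz; rewrite -[e]/(`|e%:Z|)%N -dvdzE.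
have -> : (z %% m%:Z)%Z = z - (z %/ m%:Z)%Z * m%:Z by rewrite {2}(divz_eq z m%:Z) addrC addKr.
by apply: rpredB => //; apply: dvdz_mull; rewrite dvdzE.
Qed.

Definition phi (F : finFieldType) u (A C : 'M[F]_u) (x : {ffun 'I_u -> F * F}) :
  {ffun 'I_u -> F * F} :=
  [ffun k => (\sum_r (x r).1 * A r k, \sum_r (x r).2 * C k r)].

Lemma phi_comp (F : finFieldType) u (A1 C1 A2 C2 : 'M[F]_u) x :
  phi A2 C2 (phi A1 C1 x) = phi (A1 *m A2) (C2 *m C1) x.
Proof.
apply/ffunP=> k; rewrite !ffunE /=; congr (_, _).
  under eq_bigr do rewrite ffunE /= mulr_suml.
  rewrite exchange_big; apply: eq_bigr => s _; rewrite mxE mulr_sumr.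
  by apply: eq_bigr => r _; rewrite mulrA.
under eq_bigr do rewrite ffunE /= mulr_suml.
rewrite exchange_big; apply: eq_bigr => s _; rewrite mxE mulr_sumr.
by apply: eq_bigr => r _; rewrite -mulrA [C2 k r * _]mulrC.
Qed.

Lemma phi1 (F : finFieldType) u (x : {ffun 'I_u -> F * F}) : phi 1%:M 1%:M x = x.
Proof.
apply/ffunP=> k; rewrite !ffunE /=.
rewrite (bigD1 k) //= big1 ?addr0; last by move=> r /negPf h; rewrite mxE h mulr0.
rewrite (bigD1 k) //= big1 ?addr0; last by move=> r; rewrite eq_sym => /negPf h; rewrite mxE h mulr0.
by rewrite !mxE eqxx !mulr1; case: (x k).
Qed.

Lemma bil (F : finFieldType) u (A C : 'M[F]_u) (f g : 'I_u -> F) :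
  A *m C = 1%:M ->
  \sum_k (\sum_r f r * A r k) * (\sum_s g s * C k s) = \sum_r f r * g r.
Proof.
move=> AC.
transitivity (\sum_r \sum_s f r * g s * (A *m C) r s).
  under eq_bigr do rewrite mulr_suml.
  rewrite exchange_big; apply: eq_bigr => r _.
  under eq_bigr do rewrite mulr_sumr.
  rewrite exchange_big; apply: eq_bigr => s _.
  rewrite mxE mulr_sumr; apply: eq_bigr => k _.
  by rewrite -!mulrA; congr (_ * _); rewrite mulrCA.
apply: eq_bigr => r _; rewrite AC.
rewrite (bigD1 r) //= big1 ?addr0; last by move=> s; rewrite eq_sym => /negPf h; rewrite mxE h mulr0.
by rewrite mxE eqxx mulr1.
Qed.

Lemma fix_iota (m e : nat) (K F : finFieldType) (iota : {rmorphism K -> F}) (z : int) :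
  (e %| m)%N -> (e%:Z %| z)%Z -> #|K| = (2 ^ e)%N ->
  forall k : K, iota k ^+ (2 ^ `|(z %% m%:Z)%Z|) = iota k.
Proof.
move=> em ez hK k; rewrite -rmorphXn; congr (iota _).
have /dvdnP [r ->] := dvd_t em ez.
by rewrite mulnC fixK.
Qed.

Definition term (F : finFieldType) t (p : F * F) := p.1 * p.2 ^+ (2 ^ t) + p.1 ^+ (2 ^ t) * p.2.

Lemma phi_form (F : finFieldType) u (A C : 'M[F]_u) t (x : {ffun 'I_u -> F * F}) :
  (2 \in [pchar F])%N -> A *m C = 1%:M ->
  (forall i j, A i j ^+ (2 ^ t) = A i j) -> (forall i j, C i j ^+ (2 ^ t) = C i j) ->
  \sum_i term t (phi A C x i) = \sum_i term t (x i).
Proof.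
move=> ch AC fA fC; rewrite /term !big_split /=; congr (_ + _).
  rewrite -(bil (fun r => (x r).1) (fun r => (x r).2 ^+ (2 ^ t)) AC).
  apply: eq_bigr => i _; rewrite ffunE /= frob_sum //; congr (_ * _).
  by apply: eq_bigr => r _; rewrite exprMn fC.
rewrite -(bil (fun r => (x r).1 ^+ (2 ^ t)) (fun r => (x r).2) AC).
apply: eq_bigr => i _; rewrite ffunE /= frob_sum //; congr (_ * _).
by apply: eq_bigr => r _; rewrite exprMn fA.
Qed.

Lemma phiV (m n d e s u : nat) (K F : finFieldType) (iota : {rmorphism K -> F})
  (M P : 'M[K]_u) (x : {ffun 'I_u -> F * F}) :
  M *m P = 1%:M -> (e %| m)%N -> (e %| d)%N -> #|K| = (2 ^ e)%N -> (2 \in [pchar F])%N ->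
  x \in Vset F m n d e s u -> phi (map_mx iota M) (map_mx iota P) x \in Vset F m n d e s u.
Proof.
move=> MP em ed hK ch; rewrite !inE => /forallP hx; apply/forallP => j.
move: (hx j).
set z := (((n %/ e)%:Z - (nat_of_ord j)%:Z) * d%:Z)%R.
have ez : (e%:Z %| z)%Z by apply: dvdz_mull; rewrite dvdzE.
set t := `|(z %% m%:Z)%Z|%N.
have fx := @fix_iota m e K F iota z em ez hK.
have AC : map_mx iota M *m map_mx iota P = 1%:M by rewrite -map_mxM MP map_mx1.
have eT : forall y : {ffun 'I_u -> F * F},
   \sum_(i < u) ((y i).1 * frobz m z (y i).2 + frobz m z (y i).1 * (y i).2)
   = \sum_i term t (y i) by move=> y; apply: eq_bigr.
rewrite !eT phi_form // => i k; rewrite mxE fx //.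
Qed.

Lemma basis_ex (K : fieldType) u (H : {vspace 'rV[K]_u}) :
  exists M P : 'M[K]_u, [/\ P *m M = 1%:M,
     forall k : 'I_u, (k < \dim H)%N -> row k M \in H &
     forall c, c \in H -> forall k : 'I_u, (\dim H <= k)%N -> (c *m P) 0 k = 0].
Proof.
set S := (vbasis H ++ vbasis H^C)%VS.
have dimf : \dim (fullv : {vspace 'rV[K]_u}) = u by rewrite dimvf /dim /= mul1n.
have leH : (\dim H <= u)%N by rewrite -[X in (_ <= X)%N]dimf dimvS // subvf.
have sS : size S = u by rewrite size_cat !size_tuple dimv_compl dimf subnKC.
have freeS : free S.
  rewrite cat_free (basis_free (vbasisP H)) (basis_free (vbasisP H^C)) /= (span_basis (vbasisP H)) (span_basis (vbasisP H^C)).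
  by apply/directv_addP; rewrite capv_compl.
have spanS : (<<S>> = fullv)%VS by rewrite span_cat (span_basis (vbasisP H)) (span_basis (vbasisP H^C)) addv_complf.
have [B BS] : exists B : u.-tuple 'rV[K]_u, val B = S.
  exists [tuple S`_k | k < u].
  apply: (@eq_from_nth _ 0); first by rewrite size_tuple sS.
  move=> k; rewrite size_tuple => ku.
  by rewrite -[k]/(val (Ordinal ku)) -tnth_nth tnth_mktuple.
have Bk : forall k : 'I_u, B`_k = S`_k by move=> k; rewrite BS.
have freeB : free B by rewrite BS.
have spanB : forall v, v \in <<B>>%VS by move=> v; rewrite BS spanS memvf.
pose M : 'M[K]_u := \matrix_(k < u, j < u) (B`_k) 0 j.
pose P : 'M[K]_u := \matrix_(r < u, k < u) coord B k (delta_mx 0 r).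
have rowM : forall k, row k M = B`_k by move=> k; apply/rowP => j; rewrite !mxE.
have cP : forall c, c *m P = \row_k coord B k c.
  move=> c; apply/rowP => k; rewrite !mxE.
  rewrite {2}(row_sum_delta c) linear_sum; apply: eq_bigr => r _.
  by rewrite linearZ /= mxE.
exists M, P; split.
- apply/row_matrixP => r; rewrite row_mul rowE cP mulmx_sum_row.
  rewrite [RHS]rowE mulmx1.
  under eq_bigr do rewrite rowM mxE.
  by rewrite -coord_span.
- move=> k kH; rewrite rowM Bk nth_cat size_tuple kH.
  by apply: vbasis_mem; apply: mem_nth; rewrite size_tuple.
- move=> c cH k kH; rewrite cP mxE.
  rewrite (coord_vbasis cH) linear_sum big1 // => l _.
  have lu : (l < u)%N by apply: leq_trans leH.
  have -> : (vbasis H)`_l = B`_(Ordinal lu) by rewrite Bk /= nth_cat size_tuple ltn_ord.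
  have cf := coord_free (Ordinal lu) k freeB; rewrite /= in cf; rewrite linearZ /= cf.
  case: eqP => [el|]; last by rewrite mulr0.
  by move: kH; rewrite -el /= leqNgt ltn_ord.
Qed.

Definition Gset (F : finFieldType) m n d e s u i : {set {ffun 'I_u -> F * F}} :=
  [set x in Vset F m n d e s u | [forall k : 'I_u, (k < i)%N ==> ((x k).2 == 0)]].

Definition gl (F : finFieldType) i u' (p : {ffun 'I_i -> F} * {ffun 'I_u' -> F * F}) :
  {ffun 'I_(i + u') -> F * F} :=
  [ffun k => match split k with inl k1 => (p.1 k1, 0) | inr k2 => p.2 k2 end].

Lemma sumsplit (F : finFieldType) m z i u' (x : {ffun 'I_(i + u') -> F * F}) :
  (forall k : 'I_i, (x (lshift u' k)).2 = 0) ->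
  \sum_(k < i + u') ((x k).1 * frobz m z (x k).2 + frobz m z (x k).1 * (x k).2)
  = \sum_(k < u') ((x (rshift i k)).1 * frobz m z (x (rshift i k)).2
                  + frobz m z (x (rshift i k)).1 * (x (rshift i k)).2).
Proof.
move=> h0; rewrite big_split_ord /= big1 ?add0r // => k _.
by rewrite h0 /frobz frob0 !mulr0 addr0.
Qed.

Lemma countG (F : finFieldType) m n d e s i u' :
  #|Gset F m n d e s (i + u') i| = (#|F| ^ i * #|Vset F m n d e s u'|)%N.
Proof.
have sl : forall j : 'I_i, split (lshift u' j) = inl j := fun j => unsplitK (inl j).
have sr : forall j : 'I_u', split (rshift i j) = inr j := fun j => unsplitK (inr j).
have -> : Gset F m n d e s (i + u') i = (@gl F i u') @: setX setT (Vset F m n d e s u').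
  apply/setP => x; apply/idP/idP.
  - rewrite inE => /andP [xV /forallP x0].
    have x0' : forall k : 'I_i, (x (lshift u' k)).2 = 0.
      by move=> k; move: (x0 (lshift u' k)) => /implyP /(_ (ltn_ord k)) /eqP.
    apply/imsetP; exists ([ffun k => (x (lshift u' k)).1], [ffun k => x (rshift i k)]).
      rewrite inE /= inE /=; move: xV; rewrite !inE => /forallP xV; apply/forallP => j.
      move: (xV j); rewrite sumsplit // => h; under eq_bigr do rewrite ffunE; exact: h.
    apply/ffunP => k; rewrite ffunE; case: split_ordP => [j ->|j ->]; rewrite ?sl ?sr !ffunE //=.
    by rewrite -(x0' j); case: (x _).
  - case/imsetP => [[a y]]; rewrite inE /= inE /= => yV ->.
    have h0 : forall k : 'I_i, (gl (a, y) (lshift u' k)).2 = 0 by move=> k; rewrite ffunE sl.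
    rewrite inE; apply/andP; split.
      move: yV; rewrite !inE => /forallP yV; apply/forallP => j.
      rewrite sumsplit //; move: (yV j) => h.
      by under eq_bigr do rewrite ffunE sr.
    apply/forallP => k; apply/implyP; rewrite ffunE.
    by case: split_ordP.
rewrite card_in_imset; last first.
  move=> [a y] [a' y'] _ _ /ffunP h; congr (_, _).
    by apply/ffunP => k; move: (h (lshift u' k)); rewrite !ffunE sl => -[].
  by apply/ffunP => k; move: (h (rshift i k)); rewrite !ffunE sr.
by rewrite cardsX cardsT card_ffun card_ord.
Qed.

Theorem lemma6p1 (m n d e : nat) (K F : finFieldType) (iota : {rmorphism K -> F})
  (s u i : nat) (H : {vspace 'rV[K]_u}) :
  (0 < m)%N -> (0 < n)%N -> (0 < d)%N -> (0 < e)%N ->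
  m = (2 * n)%N -> e = gcdn n d -> e = gcdn m d ->
  #|F| = (2 ^ m)%N -> #|K| = (2 ^ e)%N ->
  \dim H = i ->
  #|Wset K F iota m n d e s u H| = (2 ^ (m * i) * #|Vset F m n d e s (u - i)|)%N.
Proof.
move=> m0 n0 d0 e0 mn en em' hF hK hi.
have ch : (2 \in [pchar F])%N by apply: (card_finPcharP hF).
have em : (e %| m)%N by rewrite em' dvdn_gcdl.
have ed : (e %| d)%N by rewrite em' dvdn_gcdr.
have [M [P [PM Mrow cP0]]] := basis_ex H.
have MP := mulmx1C PM.
have iMP : map_mx iota M *m map_mx iota P = 1%:M by rewrite -map_mxM MP map_mx1.
have iPM : map_mx iota P *m map_mx iota M = 1%:M by rewrite -map_mxM PM map_mx1.
have dimf : \dim (fullv : {vspace 'rV[K]_u}) = u by rewrite dimvf /dim /= mul1n.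
have leH : (i <= u)%N by rewrite -hi -[X in (_ <= X)%N]dimf dimvS // subvf.
pose ph := phi (map_mx iota M) (map_mx iota P).
pose ps := phi (map_mx iota P) (map_mx iota M).
have psph : cancel ph ps by move=> x; rewrite /ph /ps phi_comp iMP phi1.
have phps : cancel ps ph by move=> x; rewrite /ph /ps phi_comp iPM phi1.
have -> : Wset K F iota m n d e s u H = ph @: Gset F m n d e s u i.
  apply/setP => y; apply/idP/idP.
  - rewrite inE => /andP [yV /forallP yZ].
    apply/imsetP; exists (ps y); last by rewrite phps.
    rewrite inE; apply/andP; split; first exact: phiV.
    apply/forallP => k; apply/implyP => kH.
    move: (yZ (row k M)) => /implyP; rewrite Mrow ?hi // => /(_ isT).
    rewrite inE ffunE /= => /eqP h; apply/eqP; rewrite -[RHS]h; apply: eq_bigr => r _.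
    by rewrite !mxE mulrC.
  - case/imsetP => x; rewrite inE => /andP [xV /forallP x0] ->.
    rewrite inE; apply/andP; split; first exact: phiV.
    apply/forallP => c; apply/implyP => cH; rewrite inE.
    have -> : \sum_(k < u) iota (c 0 k) * (ph x k).2
        = \sum_(r < u) (x r).2 * iota ((c *m P) 0 r).
      under eq_bigr do rewrite ffunE /= mulr_sumr.
      rewrite exchange_big; apply: eq_bigr => r _.
      rewrite mxE rmorph_sum mulr_sumr; apply: eq_bigr => k _.
      by rewrite rmorphM /= mxE mulrCA.
    rewrite big1 // => r _.
    case: (ltnP r i) => ri.
      by move: (x0 r); rewrite ri => /eqP ->; rewrite mul0r.
    by rewrite cP0 ?hi // rmorph0 mulr0.
rewrite card_imset; last exact: can_inj psph.
have gen : forall u0, (i <= u0)%N ->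
    #|Gset F m n d e s u0 i| = (#|F| ^ i * #|Vset F m n d e s (u0 - i)|)%N.
  move=> u0 hu; move: (subnKC hu); move: (u0 - i)%N => u' equ; subst u0.
  exact: countG.
by rewrite gen // hF expnM.
Qed.
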